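(* Let $C$ be the Cantor set, $\mathcal{H}$ the algebra of its clopen subsets, $\mathcal{K}$ the family of its compact subsets, and let $\psi_{\mathcal{H}}\colon\mathcal{H}\to\mathbb{R}$ be an increasing submodular setfunction with $\psi_{\mathcal{H}}(\emptyset)=0$. Define $\psi_{\mathcal{K}}\colon\mathcal{K}\to\mathbb{R}$ by $\psi_{\mathcal{K}}(K)=\inf\{\psi_{\mathcal{H}}(H)\colon H\in\mathcal{H},\ K\subseteq H\}$. Then $\psi_{\mathcal{K}}$ is increasing, submodular and continuous from the right.
   Context: A setfunction $\varphi$ on a family $\mathcal{F}$ of sets closed under finite union and intersection is increasing if $X\subseteq Y$ implies $\varphi(X)\le\varphi(Y)$, and submodular if $\varphi(X)+\varphi(Y)\ge\varphi(X\cap Y)+\varphi(X\cup Y)$ for all $X,Y\in\mathcal{F}$. An increasing setfunction $\varphi$ on the compact subsets of a topological space is continuous from the right if for every $\varepsilon>0$ and every compact $K$ there is an open set $U\supseteq K$ such that $\varphi(K')<\varphi(K)+\varepsilon$ for every compact $K'\subseteq U$. *)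

(* Defs.v *)
From HB Require Import structures.
From mathcomp Require Import all_boot all_order all_algebra.
From mathcomp Require Import all_classical all_reals topology cantor.
Set Implicit Arguments. Unset Strict Implicit. Unset Printing Implicit Defensive.
Import Order.TTheory GRing.Theory Num.Theory.
Local Open Scope classical_set_scope.
Local Open Scope ring_scope.

(* The Cantor set C is modelled by the Cantor space bool^nat (product
   topology), which is homeomorphic to it.  Set functions are total
   functions on [set T]; the hypotheses only constrain them on the
   relevant family (clopen sets, resp. compact sets). *)

Definition increasing_on {T} {R : realType} (F : set (set T)) (phi : set T -> R) :=
  forall X Y, F X -> F Y -> X `<=` Y -> phi X <= phi Y.

Definition submodular_on {T} {R : realType} (F : set (set T)) (phi : set T -> R) :=
  forall X Y, F X -> F Y -> phi (X `&` Y) + phi (X `|` Y) <= phi X + phi Y.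

Definition right_continuous {T : topologicalType} {R : realType} (phi : set T -> R) :=
  forall (eps : R), 0 < eps -> forall K, compact K ->
    exists U, [/\ open U, K `<=` U &
      forall K', compact K' -> K' `<=` U -> phi K' < phi K + eps].

Definition psiK {R : realType} (psiH : set cantor_space -> R) (K : set cantor_space) : R :=
  inf [set psiH H | H in [set H : set cantor_space | clopen H /\ K `<=` H]].

(* Main.v *)
Require Import Defs.
From HB Require Import structures.
From mathcomp Require Import all_boot all_order all_algebra.
From mathcomp Require Import all_classical all_reals topology cantor.
Import Order.TTheory GRing.Theory Num.Theory.
Local Open Scope classical_set_scope.
Local Open Scope ring_scope.

Section Aux.
Variables (R : realType) (psiH : set cantor_space -> R).
Hypothesis inc : increasing_on (@clopen cantor_space) psiH.
Hypothesis h0 : psiH set0 = 0.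

Let S K := [set psiH H | H in [set H : set cantor_space | clopen H /\ K `<=` H]].

Lemma S_has_inf K : has_inf (S K).
Proof.
split.
  by exists (psiH setT); exists setT => //; split; [exact: clopenT|].
exists 0 => _ [H [cH _] <-]; rewrite -h0; apply: inc => //; exact: clopen0.
Qed.

Lemma psiK_le K H : clopen H -> K `<=` H -> psiK psiH K <= psiH H.
Proof.
move=> cH KH; apply: (ge_inf (S_has_inf K).2); by exists H.
Qed.

Lemma psiK_adh K eps : 0 < eps ->
  exists H, [/\ clopen H, K `<=` H & psiH H < psiK psiH K + eps].
Proof.
move=> e0; have [_ [H [cH KH] <-] lt] := inf_adherent e0 (S_has_inf K).
by exists H.
Qed.

Lemma psiK_ge K x : (forall H, clopen H -> K `<=` H -> x <= psiH H) ->
  x <= psiK psiH K.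
Proof.
move=> hx; apply: lb_le_inf; first exact: (S_has_inf K).1.
by move=> _ [H [cH KH] <-]; exact: hx.
Qed.
End Aux.
Arguments psiK_le {R psiH}.
Arguments psiK_ge {R psiH}.
Arguments psiK_adh {R psiH}.

Theorem lemma3p6 (R : realType) (psiH : set cantor_space -> R) :
  increasing_on (@clopen cantor_space) psiH ->
  submodular_on (@clopen cantor_space) psiH ->
  psiH set0 = 0 ->
  [/\ increasing_on (@compact cantor_space) (psiK psiH),
      submodular_on (@compact cantor_space) (psiK psiH) &
      right_continuous (psiK psiH)].
Proof.
move=> inc sub h0; split.
- move=> X Y _ _ XY; apply: (psiK_ge inc h0) => H cH YH.
  apply: (psiK_le inc h0) => //; exact: subset_trans YH.
- move=> X Y _ _; apply/ler_addgt0Pr => e e0.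
  have e20 : 0 < e / 2 by rewrite divr_gt0.
  have [H1 [c1 X1 l1]] := psiK_adh inc h0 X _ e20.
  have [H2 [c2 Y2 l2]] := psiK_adh inc h0 Y _ e20.
  have cI : clopen (H1 `&` H2) by exact: clopenI.
  have cU : clopen (H1 `|` H2) by exact: clopenU.
  have a1 := psiK_le inc h0 _ _ cI (setISS X1 Y2).
  have a2 := psiK_le inc h0 _ _ cU (setUSS X1 Y2).
  have hs := sub _ _ c1 c2.
  apply: le_trans (lerD a1 a2) _; apply: le_trans hs _.
  apply: le_trans (ltW (ltrD l1 l2)) _.
  by rewrite addrACA -splitr.
- move=> eps e0 K _.
  have [H [cH KH l]] := psiK_adh inc h0 K _ e0.
  exists H; split => //; first by case: cH.
  move=> K' _ K'H; apply: le_lt_trans l; exact: (psiK_le inc h0).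
Qed.
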